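(* Let $p$ be a prime, $K\in\{\mathbb Z_{(p)},\mathbb Z_p\}$, $G=\langle a\rangle\cong C_{p^2}$, $H=\langle a^p\rangle$, $\Phi(x)=x^{p-1}+\dots+x+1$, and for $0\leq i\leq p-2$ let $X_i$ be the $KC_{p^2}$-submodule of $KC_{p^2}$ generated by $(a-1)\Phi(a^p)$ and $\Phi(a)+(a-1)^{i+1}$. Put $u=\Phi(a)\Phi(a^p)\in X_i$. Then the restriction of $X_i$ to $KH$ is a direct sum of two $KH$-submodules, one of which is $Ku$. *)

(* Defs.v *)
(* Definitions for Lemma 7:
   - Zloc p   : the localization Z_(p) (subring of rat)
   - Zpadic p : the p-adic integers Z_p (inverse limit of Z/p^n Z)
   - cgring K N : the group ring K[C_{N+1}] of the cyclic group of order N+1,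
                  with the group realized as Z/(N+1)Z = 'I_N.+1 (additive),
                  generator a = the basis element at 1.                     *)
From HB Require Import structures.
From mathcomp Require Import all_boot all_order all_algebra.
From mathcomp Require Import boolp.
Set Implicit Arguments. Unset Strict Implicit. Unset Printing Implicit Defensive.
Import Order.TTheory GRing.Theory Num.Theory.
Local Open Scope ring_scope.

Section Zloc.
Variable p : nat.
Definition zloc_pred : {pred rat} :=
  fun x => `[< exists d : nat, coprime d p /\ (d%:R * x \is a Num.int) >].
Fact zloc_subring : subring_closed zloc_pred.
Proof.
split.
- apply/asboolP; exists 1%N; split; first exact: coprime1n.
  by rewrite mulr1.
- move=> x y /asboolP[d [cd xi]] /asboolP[e [ce yi]]; apply/asboolP.
  exists (d * e)%N; split; first by rewrite coprimeMl cd ce.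
  rewrite natrM mulrBr; apply: rpredB.
  + rewrite mulrAC; apply: rpredM => //; apply/intrP; eexists; rewrite pmulrn; reflexivity.
  + rewrite -mulrA; apply: rpredM => //; apply/intrP; eexists; rewrite pmulrn; reflexivity.
- move=> x y /asboolP[d [cd xi]] /asboolP[e [ce yi]]; apply/asboolP.
  exists (d * e)%N; split; first by rewrite coprimeMl cd ce.
  by rewrite natrM mulrACA; apply: rpredM.
Qed.
HB.instance Definition _ := GRing.isSubringClosed.Build rat zloc_pred zloc_subring.
Record Zloc := MkZloc { zloc_val : rat; _ : zloc_val \in zloc_pred }.
HB.instance Definition _ := [isSub for zloc_val].
HB.instance Definition _ := [Choice of Zloc by <:].
HB.instance Definition _ := [SubChoice_isSubComNzRing of Zloc by <:].
End Zloc.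

(* Z_p = inverse limit of Z/p^nZ: coherent sequences (x_n)_n with      *)
(* 0 <= x_n < p^n and x_n = x_{n+1} mod p^n; ring operations computed  *)
(* componentwise mod p^n.  (The modulus base is maxn p 2, which is p    *)
(* for every prime p; this only avoids a degenerate ring for p < 2.)    *)
Section Zpadic.
Variable p : nat.
Definition zpq (n : nat) : int := ((maxn p 2) ^ n)%N.
Definition zp_coh (f : nat -> int) : Prop := forall n, f n = modz (f n.+1) (zpq n).
Record Zpadic := MkZpadic { zp_seq : nat -> int; _ : `[< zp_coh zp_seq >] }.
HB.instance Definition _ := [isSub for zp_seq].
HB.instance Definition _ := [Choice of Zpadic by <:].

Lemma modz_mulr_mod (m d k : int) : modz (modz m (d * k)) d = modz m d.
Proof.
rewrite {2}(divz_eq m (d * k)) mulrA mulrAC modzMDl //.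
Qed.

Lemma zpqS n : zpq n.+1 = zpq n * (maxn p 2)%:Z.
Proof. by rewrite /zpq expnSr PoszM. Qed.

Lemma zp_mkP (g : nat -> int) :
  (forall n, (g n.+1 = g n %[mod zpq n])%Z) -> `[< zp_coh (fun n => modz (g n) (zpq n)) >].
Proof.
move=> H; apply/asboolP => n /=.
by rewrite zpqS modz_mulr_mod H.
Qed.

Definition zp_mk g H := MkZpadic (@zp_mkP g H).

Lemma zp_cohE (x : Zpadic) n : (zp_seq x n.+1 = zp_seq x n %[mod zpq n])%Z.
Proof. by case: x => f /asboolP H /=; rewrite (H n) modz_mod. Qed.

Lemma zp_red (x : Zpadic) n : modz (zp_seq x n) (zpq n) = zp_seq x n.
Proof. by case: x => f /asboolP H /=; rewrite (H n) modz_mod. Qed.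

Lemma zp_addP (x y : Zpadic) n :
  ((zp_seq x n.+1 + zp_seq y n.+1) = (zp_seq x n + zp_seq y n) %[mod zpq n])%Z.
Proof. by rewrite -modzDm !zp_cohE modzDm. Qed.
Lemma zp_mulP (x y : Zpadic) n :
  ((zp_seq x n.+1 * zp_seq y n.+1) = (zp_seq x n * zp_seq y n) %[mod zpq n])%Z.
Proof. by rewrite -modzMm !zp_cohE modzMm. Qed.
Lemma zp_oppP (x : Zpadic) n :
  (- zp_seq x n.+1 = - zp_seq x n %[mod zpq n])%Z.
Proof. by rewrite -modzNm zp_cohE modzNm. Qed.
Lemma zp_cstP (c : int) n : (c = c %[mod zpq n])%Z.
Proof. by []. Qed.

Definition zp_add x y := zp_mk (zp_addP x y).
Definition zp_mul x y := zp_mk (zp_mulP x y).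
Definition zp_opp x := zp_mk (zp_oppP x).
Definition zp_cst c := zp_mk (zp_cstP c).

Lemma zp_eq (x y : Zpadic) : (forall n, zp_seq x n = zp_seq y n) -> x = y.
Proof. by move=> H; apply: val_inj; apply: funext. Qed.

Lemma zp_addA : associative zp_add.
Proof. by move=> x y z; apply: zp_eq => n /=; rewrite modzDml modzDmr addrA. Qed.
Lemma zp_addC : commutative zp_add.
Proof. by move=> x y; apply: zp_eq => n /=; rewrite addrC. Qed.
Lemma zp_add0 : left_id (zp_cst 0) zp_add.
Proof. by move=> x; apply: zp_eq => n /=; rewrite mod0z add0r zp_red. Qed.
Lemma zp_addN : left_inverse (zp_cst 0) zp_opp zp_add.
Proof. by move=> x; apply: zp_eq => n /=; rewrite modzDml addNr mod0z. Qed.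

HB.instance Definition _ := GRing.isZmodule.Build Zpadic zp_addA zp_addC zp_add0 zp_addN.

Lemma zp_mulA : associative zp_mul.
Proof. by move=> x y z; apply: zp_eq => n /=; rewrite modzMml modzMmr mulrA. Qed.
Lemma zp_mulC : commutative zp_mul.
Proof. by move=> x y; apply: zp_eq => n /=; rewrite mulrC. Qed.
Lemma zp_mul1 : left_id (zp_cst 1) zp_mul.
Proof. by move=> x; apply: zp_eq => n /=; rewrite modzMml mul1r zp_red. Qed.
Lemma zp_mulDl : left_distributive zp_mul zp_add.
Proof. by move=> x y z; apply: zp_eq => n /=; rewrite modzMml modzDm mulrDl. Qed.
Lemma zp_1n0 : zp_cst 1 != 0.
Proof.
apply/eqP => /(congr1 (fun x => zp_seq x 1%N)) /=.
rewrite /zpq expn1 mod0z modz_nat /= modn_small //.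
by rewrite (leq_trans _ (leq_maxr p 2)).
Qed.

HB.instance Definition _ := GRing.Zmodule_isComNzRing.Build Zpadic
  zp_mulA zp_mulC zp_mul1 zp_mulDl zp_1n0.
End Zpadic.

Section CGring.
Variables (K : comNzRingType) (N : nat).
Definition cgring : Type := {ffun 'I_N.+1 -> K}.
HB.instance Definition _ := GRing.Zmodule.copy cgring {ffun 'I_N.+1 -> K}.

Definition cg_scale (c : K) (f : cgring) : cgring := [ffun k => c * f k].
Lemma cg_scaleA a b v : cg_scale a (cg_scale b v) = cg_scale (a * b) v.
Proof. by apply/ffunP => k; rewrite !ffunE mulrA. Qed.
Lemma cg_scale1 : left_id 1 cg_scale.
Proof. by move=> v; apply/ffunP => k; rewrite !ffunE mul1r. Qed.
Lemma cg_scaleDr : right_distributive cg_scale +%R.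
Proof. by move=> a u v; apply/ffunP => k; rewrite !ffunE mulrDr. Qed.
Lemma cg_scaleDl v : {morph cg_scale^~ v : a b / a + b}.
Proof. by move=> a b; apply/ffunP => k; rewrite !ffunE mulrDl. Qed.
HB.instance Definition _ := GRing.Zmodule_isLmodule.Build K cgring
  cg_scaleA cg_scale1 cg_scaleDr cg_scaleDl.

Definition cg_one : cgring := [ffun k => (k == 0)%:R].
Definition cg_mul (f g : cgring) : cgring :=
  [ffun k => \sum_(i : 'I_N.+1) f i * g (k - i)].

Lemma cg_mulC : commutative cg_mul.
Proof.
move=> f g; apply/ffunP => k; rewrite !ffunE.
rewrite (reindex_inj (subrI k)) /=; apply: eq_bigr => i _.
by rewrite subKr mulrC.
Qed.
Lemma cg_mulA : associative cg_mul.
Proof.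
move=> f g h; apply/ffunP => k; rewrite !ffunE.
under eq_bigr do rewrite ffunE big_distrr.
under [RHS]eq_bigr do rewrite ffunE big_distrl.
rewrite [RHS]exchange_big /=; apply: eq_bigr => i _.
rewrite [RHS](reindex_inj (addIr i)) /=; apply: eq_bigr => j _.
by rewrite addrK mulrA opprD addrA [k - j - i]addrAC.
Qed.
Lemma cg_mul1 : left_id cg_one cg_mul.
Proof.
move=> f; apply/ffunP => k; rewrite !ffunE (bigD1 0) //= big1 => [|i /negbTE Hi].
  by rewrite ffunE eqxx mul1r subr0 addr0.
by rewrite ffunE Hi mul0r.
Qed.
Lemma cg_mulDl : left_distributive cg_mul +%R.
Proof.
move=> f g h; apply/ffunP => k; rewrite !ffunE -big_split /=.
by apply: eq_bigr => i _; rewrite ffunE mulrDl.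
Qed.
Lemma cg_one_neq0 : cg_one != 0.
Proof. by apply/eqP => /ffunP /(_ 0); rewrite !ffunE eqxx; apply/eqP; exact: oner_neq0. Qed.
HB.instance Definition _ := GRing.Zmodule_isComNzRing.Build cgring
  cg_mulA cg_mulC cg_mul1 cg_mulDl cg_one_neq0.
End CGring.

Section CGringDefs.
Variables (K : comNzRingType) (N : nat).

Definition cg_gen : cgring K N := [ffun k : 'I_N.+1 => ((k : nat) == 1%N)%:R].

Definition Phi (R : pzSemiRingType) (p : nat) (x : R) : R := \sum_(j < p) x ^+ j.

Definition gen_submod2 (g1 g2 : cgring K N) : cgring K N -> Prop :=
  fun x => exists r1 r2 : cgring K N, x = r1 * g1 + r2 * g2.

Definition in_KH (p : nat) (h : cgring K N) : Prop :=
  exists c : 'I_p -> K, h = \sum_(j < p) c j *: (cg_gen ^+ p) ^+ j.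

Definition KH_submodule (p : nat) (Y : cgring K N -> Prop) : Prop :=
  [/\ Y 0,
      (forall x y, Y x -> Y y -> Y (x + y)),
      (forall (c : K) x, Y x -> Y (c *: x)) &
      (forall h x, in_KH p h -> Y x -> Y (h * x))].
End CGringDefs.

(* Main.v *)
Require Import Defs.
From HB Require Import structures.
From mathcomp Require Import all_boot all_order all_algebra.
From mathcomp Require Import boolp.
From mathcomp Require Import ring zify.
Import Order.TTheory GRing.Theory Num.Theory.
Local Open Scope ring_scope.

Module Aux.
Set Implicit Arguments. Unset Strict Implicit. Unset Printing Implicit Defensive.

Lemma coefX1 (R : nzRingType) j n : ((('X + 1 : {poly R}) ^+ j)`_n = ('C(j, n))%:R).
Proof.
elim: j n => [|j IH] n.
  by rewrite expr0 coef1 bin0n; case: n.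
rewrite exprSr mulrDr mulr1 coefD coefMX; case: n => [|n] /=; rewrite !IH.
  by rewrite add0r !bin0.
by rewrite binS natrD addrC.
Qed.

Section Fp.
Variable p : nat.
Hypothesis hp : prime p.
Local Notation F := ('F_p).

Lemma X1p : ('X + 1 : {poly F}) ^+ p = 'X^p + 1.
Proof.
rewrite exprDn_pchar ?expr1n //.
by rewrite pnatE // pchar_poly pchar_Fp.
Qed.

Lemma coefMXp1 (Q : {poly F}) q n : (n < p)%N -> (Q * ('X^p + 1) ^+ q)`_n = Q`_n.
Proof.
move=> hn; elim: q => [|q IH]; first by rewrite expr0 mulr1.
by rewrite exprSr mulrA mulrDr mulr1 coefD coefMXn hn add0r IH.
Qed.

Lemma coefX1mod j n : (n < p)%N -> ((('X + 1 : {poly F}) ^+ j)`_n = ('C(j %% p, n))%:R).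
Proof.
move=> hn; rewrite {1}(divn_eq j p) exprD mulnC exprM X1p mulrC coefMXp1 //.
exact: coefX1.
Qed.

Lemma sumX1 : \sum_(j < p) ('X + 1 : {poly F}) ^+ j = 'X^(p.-1).
Proof.
apply: (@mulfI _ 'X); first by rewrite polyX_eq0.
rewrite -{1}(addrK 1 'X) -subrX1 X1p addrK -exprS prednK //.
exact: prime_gt0.
Qed.

Lemma dvdz_Fp (z : int) : (z%:~R : F) = 0 -> (p %| z)%Z.
Proof.
case: z => [n|n] /=.
  by move/eqP; rewrite -(dvdn_pcharf (pchar_Fp hp)).
rewrite NegzE mulrNz => /eqP; rewrite oppr_eq0 -(dvdn_pcharf (pchar_Fp hp)).
by rewrite /dvdz /=.
Qed.
End Fp.


Section Cong.
Variables p n : nat.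
Hypothesis hp : prime p.
Hypothesis hn1 : (0 < n)%N.
Hypothesis hn2 : (n <= p.-1)%N.
Local Notation F := ('F_p).

Definition cc e := 'C(e %% p, n).
Definition alpha : int := 1 + \sum_(j < p) (cc j)%:Z.
Definition TT m : int := \sum_(i < n.+1) ((-1)^+i * (cc (m + (n - i)))%:Z) *+ 'C(n,i).

Lemma key_cong m : (p %| alpha - \sum_(l < p) (cc (m + l))%:Z - TT m)%Z.
Proof.
have hnp : (n < p)%N by rewrite (leq_ltn_trans hn2) // prednK ?prime_gt0.
apply: (dvdz_Fp hp).
rewrite /alpha /TT !rmorphB rmorphD /= !rmorph_sum /= rmorph1.
have cE e : ((cc e)%:Z%:~R : F) = (('X + 1 : {poly F}) ^+ e)`_n.
  by rewrite coefX1mod.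
under eq_bigr do rewrite cE.
under [X in _ - X - _]eq_bigr do rewrite cE.
under [X in _ - X]eq_bigr do rewrite rmorphMn rmorphM /= rmorphXn rmorphN1 cE.
have E1 : \sum_(l < p) (('X + 1 : {poly F}) ^+ (m + l)) = ('X + 1) ^+ m * 'X^(p.-1).
  by rewrite -sumX1 // mulr_sumr; apply: eq_bigr => l _; rewrite exprD.
have E2 : \sum_(i < n.+1) ((('X + 1 : {poly F}) ^+ (m + (n - i)) * ((-1)^+i)%:P) *+ 'C(n,i))
     = ('X + 1) ^+ m * 'X^n.
  have hX : ('X : {poly F}) ^+ n = (('X + 1) + -1) ^+ n by rewrite addrK.
  rewrite hX [(_ + -1) ^+ n]exprDn mulr_sumr; apply: eq_bigr => i _.
  by rewrite mulrnAr exprD mulrA rmorphXn /= polyCN polyC1.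
have S1 : \sum_(j < p) (('X + 1 : {poly F}) ^+ j)`_n = (('X + 1) ^+ 0 * 'X^(p.-1))`_n.
  by rewrite -coef_sum -sumX1 // expr0 mul1r.
have S2 : \sum_(l < p) (('X + 1 : {poly F}) ^+ (m + l))`_n = (('X + 1) ^+ m * 'X^(p.-1))`_n.
  by rewrite -E1 coef_sum.
have S3 : \sum_(i < n.+1) ((-1) ^+ i * (('X + 1 : {poly F}) ^+ (m + (n - i)))`_n) *+ 'C(n, i)
     = (('X + 1) ^+ m * 'X^n)`_n.
  rewrite -E2 coef_sum; apply: eq_bigr => i _.
  by rewrite coefMn coefMC mulrC.
rewrite S1 S2 S3 !coefMXn ltnn subnn !coefX1 !bin0.
case: ifP => _; first by rewrite addr0 subr0 subrr.
have -> : (n - p.-1 = 0)%N by apply/eqP; rewrite subn_eq0.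
by rewrite !bin0 addrK subrr.
Qed.
End Cong.


Section GR.
Variables (K : comNzRingType) (N : nat).
Local Notation G := (cgring K N).

Lemma mulGE (x y : G) k : (x * y) k = \sum_j x j * y (k - j).
Proof. by rewrite /GRing.mul /= ffunE. Qed.
Lemma scaleGE c (x : G) k : (c *: x) k = c * x k.
Proof. by rewrite /GRing.scale /= ffunE. Qed.
Lemma oneGE : (1 : G) = [ffun k => (k == 0)%:R].
Proof. by []. Qed.
Lemma sumGE I r (P : pred I) (F : I -> G) k : (\sum_(i <- r | P i) F i) k = \sum_(i <- r | P i) F i k.
Proof. by rewrite sum_ffunE. Qed.

Definition delta (o : 'I_N.+1) : G := [ffun k => (k == o)%:R].

Lemma deltaM o o' : delta o * delta o' = delta (o + o').
Proof.
apply/ffunP => k; rewrite mulGE (bigD1 o) //= !ffunE eqxx mul1r big1 ?addr0.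
  by rewrite subr_eq addrC.
by move=> j /negbTE hj; rewrite ffunE hj mul0r.
Qed.

Lemma scalerAlG c (x y : G) : (c *: x) * y = c *: (x * y).
Proof.
apply/ffunP => k; rewrite scaleGE !mulGE big_distrr; apply: eq_bigr => j _.
by rewrite scaleGE /= mulrA.
Qed.

Lemma decompG (x : G) : x = \sum_k x k *: delta k.
Proof.
apply/ffunP => k; rewrite sumGE (bigD1 k) //= scaleGE ffunE eqxx mulr1 big1 ?addr0 //.
by move=> j hj; rewrite scaleGE ffunE eq_sym (negbTE hj) mulr0.
Qed.

Lemma apow (hN : (0 < N)%N) e : cg_gen K N ^+ e = delta (inZp e).
Proof.
elim: e => [|e IH].
  rewrite expr0 oneGE; apply/ffunP => k; rewrite !ffunE; congr ((_ : bool)%:R).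
rewrite exprSr IH.
have -> : cg_gen K N = delta (inZp 1).
  have h1 : (1 %% N.+1 = 1)%N by rewrite modn_small.
  apply/ffunP => k; rewrite !ffunE; congr ((_ : bool)%:R).
  by apply/eqP/eqP => [h|->]; [apply: val_inj => /=; rewrite h1 | rewrite /= h1].
rewrite deltaM; congr delta; apply: val_inj => /=.
by rewrite modnDm addn1.
Qed.
End GR.
Arguments delta {K N}.


Section Main.
Variables (K : comNzRingType) (p i : nat).
Hypothesis hp : prime p.
Hypothesis hi : (i <= p - 2)%N.
Local Notation N := (p ^ 2).-1.
Local Notation G := (cgring K N).
Local Notation n := i.+1.
Local Notation a := (cg_gen K N).

Lemma hM : N.+1 = (p ^ 2)%N.
Proof. by rewrite prednK // expn_gt0 prime_gt0. Qed.
Lemma hN : (0 < N)%N.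
Proof. rewrite -ltnS hM (ltn_trans (prime_gt1 hp)) // -{1}(expn1 p) ltn_exp2l //; exact: prime_gt1. Qed.

Definition w e : int := alpha p n - p%:Z * (cc p n e)%:Z.
Definition W e : K := (w e)%:~R.
Definition lam (x : G) : K := \sum_k x k * W k.

Lemma wmod e : w (e %% N.+1) = w e.
Proof.
rewrite /w /cc hM modn_dvdm //.
by rewrite expnS dvdn_mulr.
Qed.
Lemma wper e k : w (p * k + e) = w e.
Proof. by rewrite /w /cc mulnC modnMDl. Qed.

Lemma lamD x y : lam (x + y) = lam x + lam y.
Proof. by rewrite /lam -big_split; apply: eq_bigr => k _; rewrite ffunE mulrDl. Qed.
Lemma lamZ c x : lam (c *: x) = c * lam x.
Proof. by rewrite /lam big_distrr; apply: eq_bigr => k _; rewrite scaleGE /= mulrA. Qed.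
Lemma lam0 : lam 0 = 0.
Proof. by rewrite /lam big1 // => k _; rewrite ffunE mul0r. Qed.
Lemma lamN x : lam (- x) = - lam x.
Proof. by rewrite /lam -sumrN; apply: eq_bigr => k _; rewrite ffunE mulNr. Qed.
Lemma lamB x y : lam (x - y) = lam x - lam y.
Proof. by rewrite lamD lamN. Qed.
Lemma lam_sum I r (P : pred I) (F : I -> G) : lam (\sum_(j <- r | P j) F j) = \sum_(j <- r | P j) lam (F j).
Proof.
exact: (big_morph lam lamD lam0).
Qed.
Lemma lamMn x k : lam (x *+ k) = lam x *+ k.
Proof. by elim: k => [|k IH]; rewrite ?lam0 // !mulrS lamD IH. Qed.

Lemma lam_delta o : lam (delta o) = W o.
Proof.
rewrite /lam (bigD1 o) //= ffunE eqxx mul1r big1 ?addr0 //.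
by move=> j /negbTE hj; rewrite ffunE hj mul0r.
Qed.

Lemma lam_apow e : lam (a ^+ e) = W e.
Proof. by rewrite apow ?hN // lam_delta /W /= wmod. Qed.

Lemma scalerArG c (x y : G) : x * (c *: y) = c *: (x * y).
Proof. by rewrite mulrC scalerAlG mulrC. Qed.

Lemma decompA (x : G) : x = \sum_k x k *: a ^+ k.
Proof.
rewrite {1}(decompG x); apply: eq_bigr => k _; rewrite apow ?hN //.
by rewrite valZpK.
Qed.

Lemma lam_shift e x : lam (a ^+ e * x) = \sum_k x k * W (e + k).
Proof.
rewrite {1}(decompA x) mulr_sumr lam_sum; apply: eq_bigr => k _.
by rewrite scalerArG lamZ -exprD lam_apow.
Qed.

Lemma lam_Hshift j x : lam ((a ^+ p) ^+ j * x) = lam x.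
Proof.
rewrite -exprM lam_shift; apply: eq_bigr => k _.
by rewrite /W wper.
Qed.

Definition g1 : G := (a - 1) * Phi p (a ^+ p).
Definition g2 : G := Phi p a + (a - 1) ^+ n.
Definition u : G := Phi p a * Phi p (a ^+ p).

Lemma lam_g1 m : lam (a ^+ m * g1) = (p ^ 2)%:R * ((cc p n m)%:Z - (cc p n m.+1)%:Z)%:~R.
Proof.
rewrite /g1 /Phi mulrA mulr_sumr lam_sum.
have E j : a ^+ m * (a - 1) * (a ^+ p) ^+ j = a ^+ (p * j + m.+1) - a ^+ (p * j + m).
  by rewrite mulrBr mulr1 -exprSr mulrBl -!exprM -!exprD addnC [(p * j + m)%N]addnC.
under eq_bigr do rewrite E lamB !lam_apow /W !wper.
rewrite sumr_const card_ord -rmorphB -rmorphMn.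
rewrite -[((p ^ 2)%N)%:R]/(((p ^ 2)%N)%:Z%:~R : K) -rmorphM; congr (_%:~R).
rewrite /w; ring.
Qed.

Lemma lam_sign x j : lam (x * (-1) ^+ j) = (-1) ^+ j * lam x.
Proof.
elim: j => [|j IH]; first by rewrite !expr0 mulr1 mul1r.
by rewrite !exprSr mulrA mulrN1 lamN IH mulrN1 mulNr.
Qed.

Definition V m : int := \sum_(l < p) w (m + l) +
  \sum_(j < n.+1) ((-1) ^+ j * w (m + (n - j))) *+ 'C(n, j).

Lemma lam_g2_V m : lam (a ^+ m * g2) = (V m)%:~R.
Proof.
rewrite /g2 /Phi mulrDr mulr_sumr lamD lam_sum.
rewrite [(a - 1) ^+ n]exprDn mulr_sumr lam_sum.
rewrite /V rmorphD !rmorph_sum /=; congr (_ + _); apply: eq_bigr => j _.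
  by rewrite -exprD lam_apow.
rewrite mulrnAr lamMn mulrA -exprD lam_sign lam_apow.
by rewrite rmorphMn rmorphM /= rmorphXn rmorphN1.
Qed.

Lemma hn1 : (0 < n)%N. Proof. by []. Qed.
Lemma hn2 : (n <= p.-1)%N.
Proof.
have h2 := prime_gt1 hp; lia.
Qed.

Lemma V_dvd m : ((p ^ 2)%N%:Z %| V m)%Z.
Proof.
have [q hq] := dvdzP (key_cong hp hn2 m).
have S0 : \sum_(j < n.+1) ((-1) ^+ j) *+ 'C(n, j) = 0 :> int.
  have := exprDn (1 : int) (-1) n; rewrite subrr expr0n /= => /esym E.
  by rewrite -{}[RHS]E; apply: eq_bigr => j _; rewrite expr1n mul1r.
have S1 : \sum_(l < p) w (m + l) = alpha p n *+ p - p%:Z * \sum_(l < p) (cc p n (m + l))%:Z.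
  by rewrite /w sumrB sumr_const card_ord mulr_sumr.
have S2 : \sum_(j < n.+1) ((-1) ^+ j * w (m + (n - j))) *+ 'C(n, j) =
    alpha p n * (\sum_(j < n.+1) ((-1) ^+ j) *+ 'C(n, j)) - p%:Z * TT p n m.
  rewrite /TT !mulr_sumr -sumrB; apply: eq_bigr => j _; rewrite /w; ring.
apply/dvdzP; exists q; rewrite /V S1 S2 S0.
transitivity (p%:Z * (alpha p n - \sum_(l < p) (cc p n (m + l))%:Z - TT p n m)); first ring.
rewrite hq; ring.
Qed.

Lemma lam_g2 m : lam (a ^+ m * g2) = (p ^ 2)%:R * ((V m %/ (p ^ 2)%N%:Z)%Z)%:~R.
Proof. by rewrite lam_g2_V -{1}(divzK (V_dvd m)) rmorphM mulrC. Qed.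

Lemma lam_u : lam u = (p ^ 2)%:R.
Proof.
have E l : lam (a ^+ l * \sum_(j < p) (a ^+ p) ^+ j) = W l *+ p.
  rewrite mulr_sumr lam_sum -[in RHS](card_ord p) -sumr_const; apply: eq_bigr => j _.
  by rewrite -exprM -exprD addnC lam_apow /W wper.
rewrite /u /Phi mulr_suml lam_sum; under eq_bigr do rewrite E.
rewrite /W sumrMnl -rmorph_sum -rmorphMn.
rewrite -[((p ^ 2)%N)%:R]/(((p ^ 2)%N)%:Z%:~R : K); congr (_%:~R).
rewrite /w sumrB sumr_const card_ord -mulr_sumr /alpha; ring.
Qed.

Lemma au : a * u = u.
Proof.
have h : (a - 1) * u = 0.
  rewrite /u /Phi mulrA -subrX1 -subrX1 -exprM apow ?hN //.
  have -> : inZp (p * p) = 0 :> 'I_N.+1 by apply: val_inj; rewrite /= hM mulnn modnn.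
  have d0 : delta (0 : 'I_N.+1) = 1 :> G by rewrite oneGE.
  by rewrite d0 subrr.
by apply/eqP; rewrite -subr_eq0 -[X in _ - X]mul1r -mulrBl h.
Qed.

Lemma apu k : a ^+ k * u = u.
Proof. by elim: k => [|k IH]; rewrite ?mul1r // exprS -mulrA IH au. Qed.

Lemma KH_act h : in_KH p h ->
  exists s : K, (forall x, lam (h * x) = s * lam x) /\ h * u = s *: u.
Proof.
case=> c ->; exists (\sum_(j < p) c j); split.
  move=> x; rewrite mulr_suml lam_sum mulr_suml; apply: eq_bigr => j _.
  by rewrite scalerAlG lamZ lam_Hshift.
rewrite mulr_suml scaler_suml; apply: eq_bigr => j _.
by rewrite scalerAlG -exprM apu.
Qed.

Hypothesis tf : forall c : K, (p ^ 2)%:R * c = 0 -> c = 0.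

Lemma main_gen :
  let X := gen_submod2 g1 g2 in
  let Ku := fun x => exists c : K, x = c *: u in
  X u /\
  exists Y : G -> Prop,
    [/\ KH_submodule p Ku, KH_submodule p Y,
        (forall y, Y y -> X y),
        (forall x, X x -> exists c y, Y y /\ x = c *: u + y) &
        (forall x, Ku x -> Y x -> x = 0)].
Proof.
move=> X Ku.
have Xu : X u.
  exists (- (a - 1) ^+ i), (Phi p (a ^+ p)); rewrite /u /g1 /g2 exprSr; ring.
have Xadd x y : X x -> X y -> X (x + y).
  case=> r1 [r2 ->] [s1 [s2 ->]]; exists (r1 + s1), (r2 + s2); ring.
have Xscale c x : X x -> X (c *: x).
  case=> r1 [r2 ->]; exists (c *: r1), (c *: r2); by rewrite scalerDr !scalerAlG.
have Xmul h x : X x -> X (h * x).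
  case=> r1 [r2 ->]; exists (h * r1), (h * r2); by rewrite mulrDr !mulrA.
have X0 : X 0 by exists 0, 0; rewrite !mul0r addr0.
pose Y := fun x => X x /\ lam x = 0.
split => //; exists Y; split.
- split.
  + by exists 0; rewrite scale0r.
  + by move=> x y [c ->] [d ->]; exists (c + d); rewrite scalerDl.
  + by move=> c x [d ->]; exists (c * d); rewrite scalerA.
  + move=> h x hh [d ->]; have [s [_ hs]] := KH_act hh.
    by exists (d * s); rewrite scalerArG hs scalerA.
- split.
  + by split; [exact: X0 | exact: lam0].
  + by move=> x y [hx lx] [hy ly]; split; [exact: Xadd | rewrite lamD lx ly addr0].
  + by move=> c x [hx lx]; split; [exact: Xscale | rewrite lamZ lx mulr0].
  + move=> h x hh [hx lx]; have [s [hs _]] := KH_act hh.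
    by split; [exact: Xmul | rewrite hs lx mulr0].
- by move=> y [].
- move=> x hx.
  have lamrg (r g : G) (q : nat -> K) :
      (forall m, lam (a ^+ m * g) = (p ^ 2)%:R * q m) ->
      lam (r * g) = (p ^ 2)%:R * \sum_k r k * q k.
    move=> hq; rewrite {1}(decompA r) mulr_suml lam_sum mulr_sumr.
    by apply: eq_bigr => k _; rewrite scalerAlG lamZ hq mulrCA.
  have [c lx] : exists c, lam x = (p ^ 2)%:R * c.
    case: hx => r1 [r2 ->].
    rewrite lamD (lamrg r1 g1 (fun m => ((cc p n m)%:Z - (cc p n m.+1)%:Z)%:~R) lam_g1).
    rewrite (lamrg r2 g2 (fun m => ((V m %/ (p ^ 2)%N%:Z)%Z)%:~R) lam_g2).
    by eexists; rewrite -mulrDr.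
  exists c, (x - c *: u); split; last by rewrite addrC subrK.
  split; first by apply: Xadd hx _; rewrite -scaleNr; apply: Xscale Xu.
  by rewrite lamB lamZ lam_u lx mulrC subrr.
- move=> x [c ->] [_ lx]; rewrite lamZ lam_u mulrC in lx.
  by rewrite (tf lx) scale0r.
Qed.
End Main.


Lemma tf_Zloc p (hp : prime p) (c : Zloc p) : (p ^ 2)%:R * c = 0 -> c = 0.
Proof.
move=> h; apply: val_inj; move: (congr1 val h).
rewrite rmorphM rmorph_nat /= => /eqP; rewrite mulf_eq0 => /orP[|/eqP -> //].
by rewrite pnatr_eq0 expn_eq0 andbT => /eqP p0; rewrite p0 in hp.
Qed.

Lemma zp_seq_mulrn p (x : Zpadic p) k n :
  zp_seq (x *+ k) n = ((zp_seq x n * k%:Z) %% zpq p n)%Z.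
Proof.
elim: k => [|k IH]; first by rewrite mulr0n mulr0 mod0z /= mod0z.
rewrite mulrS /= IH modzDmr; congr (_ %% _)%Z.
by rewrite -addn1 PoszD mulrDr mulr1 addrC.
Qed.

Lemma tf_Zpadic p (hp : prime p) (c : Zpadic p) : (p ^ 2)%:R * c = 0 -> c = 0.
Proof.
move=> h; rewrite mulr_natl in h.
have hm : maxn p 2 = p by apply/maxn_idPl; exact: prime_gt1.
apply: zp_eq => n.
have h0 := congr1 (fun y => zp_seq y n.+2) h; rewrite /= zp_seq_mulrn mod0z in h0.
have E : zp_seq c n = ((zp_seq c n.+2) %% zpq p n)%Z.
  rewrite -zp_red -zp_cohE.
  have -> : zp_seq c n.+1 = ((zp_seq c n.+2) %% zpq p n.+1)%Z by rewrite zp_cohE zp_red.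
  by rewrite zpqS modz_mulr_mod.
rewrite E [RHS]/= mod0z; apply/dvdz_mod0P.
move/dvdz_mod0P: h0; rewrite !zpqS hm -mulrA.
have -> : (p%:Z * p%:Z) = (p ^ 2)%N%:Z by rewrite -PoszM mulnn.
rewrite dvdz_mul2r //.
by rewrite eqz_nat expn_eq0 andbT; apply/eqP => p0; rewrite p0 in hp.
Qed.

End Aux.
Import Aux.

Theorem lemma7 (p : nat) (hp : prime p) (K : comNzRingType)
  (hK : K = (Zloc p : comNzRingType) \/ K = (Zpadic p : comNzRingType))
  (i : nat) (hi : (i <= p - 2)%N) :
  let a : cgring K (p ^ 2).-1 := cg_gen K (p ^ 2).-1 in
  let X := gen_submod2 ((a - 1) * Phi p (a ^+ p)) (Phi p a + (a - 1) ^+ i.+1) in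
  let u := Phi p a * Phi p (a ^+ p) in
  let Ku := fun x => exists c : K, x = c *: u in
  X u /\
  exists Y : cgring K (p ^ 2).-1 -> Prop,
    [/\ KH_submodule p Ku, KH_submodule p Y,
        (forall y, Y y -> X y),
        (forall x, X x -> exists c y, Y y /\ x = c *: u + y) &
        (forall x, Ku x -> Y x -> x = 0)].
Proof.
have tf : forall c : K, (p ^ 2)%:R * c = 0 -> c = 0.
  by case: hK => ->; [exact: tf_Zloc | exact: tf_Zpadic].
exact: (main_gen hp hi tf).
Qed.
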